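(* Let $\mathcal{A}=\{f\in C^\infty(]0,1[,]0,1[)\mid \lim_{x\to1}f(x)=1,\ \lim_{x\to0}f(x)=0\}$ and $\mathcal{D}=\{f\in\mathcal{A}\mid \inf_{x\in]0,1[}f'(x)>0 \text{ and } \sup_{x\in]0,1[}f'(x)>0\}$, a group under composition, equipped with the Fr\''olicher (diffeological) structure induced from the Fr\'echet space $C^\infty(]0,1[,\mathbb{R})$. Then there exists a smooth path $v$ in $T_{\mathrm{id}}\mathcal{D}$ such that no smooth path $g$ in $\mathcal{D}$ satisfies $\partial_t g\circ g^{-1}=v$.
   Context: $C^\infty(]0,1[,\mathbb{R})$ carries the Fr\'echet topology of the seminorms $\|f\|_{n,k}=\sup_{\frac{1}{n+1}\le x\le\frac{n}{n+1}}|f^{(k)}(x)|$. The smooth maps into $\mathcal{D}$ (plots) are those that are smooth into $C^\infty(]0,1[,\mathbb{R})$ with values in $\mathcal{D}$. $T_{\mathrm{id}}\mathcal{D}$ is the tangent space at the identity, i.e. the set of derivatives at $0$ of smooth paths in $\mathcal{D}$ through $\mathrm{id}$; it is a subset of $C^\infty(]0,1[,\mathbb{R})$. *)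

(* Defs.v *)
From Stdlib Require Import Reals Lra ClassicalEpsilon.
From Coquelicot Require Import Coquelicot.
Open Scope R_scope.

(* An element of C^oo(]0,1[, R) is represented by a total function R -> R;
   only its values on ]0,1[ matter. *)
Definition in01 (x : R) : Prop := 0 < x < 1.

Definition smooth01 (f : R -> R) : Prop :=
  forall (k : nat) (x : R), in01 x -> ex_derive_n f k x.

(* Seminorm ||f||_{n,k} = sup_{1/(n+1) <= x <= n/(n+1)} |f^(k)(x)| *)
Definition in_Kn (n : nat) (x : R) : Prop :=
  1 / (INR n + 1) <= x <= INR n / (INR n + 1).

Definition frechet_deriv (c : R -> R -> R) (t : R) (d : R -> R) : Prop :=
  forall (n k : nat) (eps : R), 0 < eps ->
  exists delta : R, 0 < delta /\
    forall h : R, h <> 0 -> Rabs h < delta ->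
    forall x : R, in_Kn n x ->
      Rabs (Derive_n (fun y => (c (t + h) y - c t y) / h) k x
            - Derive_n d k x) <= eps.

(* Smooth (C^oo) curve R -> C^oo(]0,1[,R): all iterated Frechet derivatives
   exist (continuity of each follows from differentiability of the next). *)
Definition smooth_curve (c : R -> R -> R) : Prop :=
  exists cs : nat -> R -> R -> R,
    (forall t x, in01 x -> cs O t x = c t x) /\
    (forall j t, smooth01 (cs j t)) /\
    (forall j t, frechet_deriv (cs j) t (cs (S j) t)).

Definition inA (f : R -> R) : Prop :=
  smooth01 f /\ (forall x, in01 x -> in01 (f x)) /\
  filterlim f (at_left 1) (locally 1) /\
  filterlim f (at_right 0) (locally 0).

Definition inD (f : R -> R) : Prop :=
  inA f /\
  (exists c, 0 < c /\ forall x, in01 x -> c <= Derive f x) /\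
  (exists M, forall x, in01 x -> Derive f x <= M).

Definition smooth_path_D (g : R -> R -> R) : Prop :=
  smooth_curve g /\ forall t, inD (g t).

Definition in_TidD (v0 : R -> R) : Prop :=
  exists g, smooth_path_D g /\ (forall x, in01 x -> g 0 x = x) /\
    frechet_deriv g 0 v0.

(* inverse on ]0,1[ (the genuine inverse for elements of D) *)
Definition inv01 (f : R -> R) (y : R) : R :=
  epsilon (inhabits 0) (fun x => in01 x /\ f x = y).

(* Main.v *)
Require Import Defs.
From Stdlib Require Import Reals Lra Psatz ClassicalEpsilon FunctionalExtensionality.
From Coquelicot Require Import Coquelicot.
Open Scope R_scope.

Inductive ex := EX | ES | EC (c : R) | EAdd (a b : ex) | EMul (a b : ex) | EInv (a : ex).

Fixpoint eval (e : ex) (s x : R) : R :=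
  match e with
  | EX => x | ES => s | EC c => c
  | EAdd a b => eval a s x + eval b s x
  | EMul a b => eval a s x * eval b s x
  | EInv a => / eval a s x
  end.

Fixpoint dx (e : ex) : ex :=
  match e with
  | EX => EC 1 | ES => EC 0 | EC _ => EC 0
  | EAdd a b => EAdd (dx a) (dx b)
  | EMul a b => EAdd (EMul (dx a) b) (EMul a (dx b))
  | EInv a => EMul (EMul (EC (-1)) (dx a)) (EMul (EInv a) (EInv a))
  end.

Fixpoint ds (e : ex) : ex :=
  match e with
  | EX => EC 0 | ES => EC 1 | EC _ => EC 0
  | EAdd a b => EAdd (ds a) (ds b)
  | EMul a b => EAdd (EMul (ds a) b) (EMul a (ds b))
  | EInv a => EMul (EMul (EC (-1)) (ds a)) (EMul (EInv a) (EInv a))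
  end.

Fixpoint wf (e : ex) : Prop :=
  match e with
  | EAdd a b => wf a /\ wf b
  | EMul a b => wf a /\ wf b
  | EInv a => wf a /\ (forall s x, in01 x -> eval a s x <> 0) /\
      (forall n, exists m, 0 < m /\ forall s x, in_Kn n x -> m <= Rabs (eval a s x))
  | _ => True
  end.

Fixpoint dxn (k : nat) (e : ex) : ex := match k with O => e | S k => dx (dxn k e) end.
Fixpoint dsn (k : nat) (e : ex) : ex := match k with O => e | S k => ds (dsn k e) end.

Lemma wf_dx e : wf e -> wf (dx e).
Proof. induction e; simpl; tauto. Qed.
Lemma wf_ds e : wf e -> wf (ds e).
Proof. induction e; simpl; tauto. Qed.
Lemma wf_dxn k e : wf e -> wf (dxn k e).
Proof. induction k; simpl; auto using wf_dx. Qed.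
Lemma wf_dsn k e : wf e -> wf (dsn k e).
Proof. induction k; simpl; auto using wf_ds. Qed.

Lemma deriv_x e s x : wf e -> in01 x ->
  is_derive (fun y => eval e s y) x (eval (dx e) s x).
Proof.
  intros W Hx; induction e; simpl in *.
  - exact (@is_derive_id R_AbsRing _).
  - exact (@is_derive_const R_AbsRing R_NormedModule _ _).
  - exact (@is_derive_const R_AbsRing R_NormedModule _ _).
  - apply (is_derive_plus (fun y => eval e1 s y) (fun y => eval e2 s y)); tauto.
  - apply (is_derive_mult (fun y => eval e1 s y) (fun y => eval e2 s y)); try tauto.
    intros; apply Rmult_comm.
  - destruct W as [W1 [W2 _]].
    assert (H := is_derive_inv (fun y => eval e s y) x _ (IHe W1) (W2 s x Hx)).
    replace (-1 * eval (dx e) s x * (/ eval e s x * / eval e s x))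
      with (- eval (dx e) s x / eval e s x ^ 2) by (field; auto).
    exact H.
Qed.

Lemma deriv_s e s x : wf e -> in01 x ->
  is_derive (fun r => eval e r x) s (eval (ds e) s x).
Proof.
  intros W Hx; induction e; simpl in *.
  - exact (@is_derive_const R_AbsRing R_NormedModule _ _).
  - exact (@is_derive_id R_AbsRing _).
  - exact (@is_derive_const R_AbsRing R_NormedModule _ _).
  - apply (is_derive_plus (fun y => eval e1 y x) (fun y => eval e2 y x)); tauto.
  - apply (is_derive_mult (fun y => eval e1 y x) (fun y => eval e2 y x)); try tauto.
    intros; apply Rmult_comm.
  - destruct W as [W1 [W2 _]].
    assert (H := is_derive_inv (fun y => eval e y x) s _ (IHe W1) (W2 s x Hx)).
    replace (-1 * eval (ds e) s x * (/ eval e s x * / eval e s x))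
      with (- eval (ds e) s x / eval e s x ^ 2) by (field; auto).
    exact H.
Qed.

Lemma comm_xs e s x : eval (dx (ds e)) s x = eval (ds (dx e)) s x.
Proof.
  induction e; simpl in *; try ring.
  - rewrite IHe1, IHe2; ring.
  - rewrite IHe1, IHe2; ring.
  - rewrite IHe; ring.
Qed.

Lemma in01_locally x : in01 x -> locally x in01.
Proof.
  intros [H0 H1].
  assert (He : 0 < Rmin x (1 - x)) by (apply Rmin_glb_lt; lra).
  exists (mkposreal _ He). intros y Hy.
  change (Rabs (y - x) < Rmin x (1 - x)) in Hy.
  assert (Rmin x (1-x) <= x) by apply Rmin_l.
  assert (Rmin x (1-x) <= 1 - x) by apply Rmin_r.
  apply Rabs_def2 in Hy. unfold in01; lra.
Qed.

Lemma Kn_in01 n x : in_Kn n x -> in01 x.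
Proof.
  unfold in_Kn, in01; intros [H1 H2].
  assert (0 <= INR n) by apply pos_INR.
  assert (0 < 1 / (INR n + 1)) by (apply Rdiv_lt_0_compat; lra).
  split; [lra|].
  apply Rle_lt_trans with (1 := H2).
  apply (Rmult_lt_reg_r (INR n + 1)); [lra|].
  unfold Rdiv; rewrite Rmult_assoc, Rinv_l by lra. lra.
Qed.

Lemma derive_family (f : R -> R) (fd : nat -> R -> R) :
  (forall x, in01 x -> fd O x = f x) ->
  (forall k x, in01 x -> is_derive (fd k) x (fd (S k) x)) ->
  forall k x, in01 x -> ex_derive_n f k x /\ Derive_n f k x = fd k x.
Proof.
  intros H0 HS k. induction k; intros x Hx.
  - split; [exact I | simpl; symmetry; auto].
  - assert (L : locally x (fun t => fd k t = Derive_n f k t)).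
    { apply filter_imp with (2 := in01_locally x Hx). intros y Hy.
      symmetry; apply IHk; auto. }
    split.
    + simpl. apply ex_derive_ext_loc with (1 := L).
      eexists; apply HS; auto.
    + simpl. rewrite <- (Derive_ext_loc _ _ _ L).
      apply is_derive_unique, HS; auto.
Qed.

Lemma derive_n_eval e s : wf e ->
  forall k x, in01 x -> ex_derive_n (fun y => eval e s y) k x /\
    Derive_n (fun y => eval e s y) k x = eval (dxn k e) s x.
Proof.
  intros W. apply (derive_family _ (fun k y => eval (dxn k e) s y)).
  - reflexivity.
  - intros k x Hx. simpl. apply deriv_x; auto. apply wf_dxn; auto.
Qed.

Lemma dx_congr e1 e2 : wf e1 -> wf e2 ->
  (forall s x, in01 x -> eval e1 s x = eval e2 s x) ->
  forall s x, in01 x -> eval (dx e1) s x = eval (dx e2) s x.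
Proof.
  intros W1 W2 H s x Hx.
  assert (L : locally x (fun t => eval e1 s t = eval e2 s t)).
  { apply filter_imp with (2 := in01_locally x Hx). intros y Hy. auto. }
  assert (D1 := deriv_x e1 s x W1 Hx).
  assert (D2 := deriv_x e2 s x W2 Hx).
  apply (is_derive_ext_loc _ _ _ _ L) in D1.
  rewrite <- (is_derive_unique _ _ _ D1). apply is_derive_unique; auto.
Qed.

Lemma commn k e s x : wf e -> in01 x ->
  eval (dxn k (ds e)) s x = eval (ds (dxn k e)) s x.
Proof.
  intros W; revert s x. induction k; intros s x Hx; simpl.
  - reflexivity.
  - rewrite (dx_congr (dxn k (ds e)) (ds (dxn k e))); auto.
    + apply comm_xs.
    + apply wf_dxn, wf_ds; auto.
    + apply wf_ds, wf_dxn; auto.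
Qed.

Lemma bounded e : wf e -> forall n s0, exists M, forall s x,
  Rabs (s - s0) <= 1 -> in_Kn n x -> Rabs (eval e s x) <= M.
Proof.
  intros W n s0. induction e; simpl in *.
  - exists 1. intros s x _ Hx. apply Kn_in01 in Hx. unfold in01 in Hx.
    rewrite Rabs_pos_eq; lra.
  - exists (Rabs s0 + 1). intros s x Hs _.
    replace s with (s0 + (s - s0)) by ring.
    eapply Rle_trans; [apply Rabs_triang|]. lra.
  - exists (Rabs c). intros; lra.
  - destruct W as [W1 W2]. destruct (IHe1 W1) as [M1 H1], (IHe2 W2) as [M2 H2].
    exists (M1 + M2). intros s x Hs Hx.
    eapply Rle_trans; [apply Rabs_triang|].
    specialize (H1 s x Hs Hx); specialize (H2 s x Hs Hx); lra.
  - destruct W as [W1 W2]. destruct (IHe1 W1) as [M1 H1], (IHe2 W2) as [M2 H2].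
    exists (M1 * M2). intros s x Hs Hx.
    rewrite Rabs_mult.
    specialize (H1 s x Hs Hx); specialize (H2 s x Hs Hx).
    apply Rmult_le_compat; auto using Rabs_pos.
  - destruct W as [W1 [W2 W3]]. destruct (W3 n) as [m [Hm Hb]].
    exists (/ m). intros s x Hs Hx.
    specialize (Hb s x Hx).
    assert (eval e s x <> 0) by (apply W2, (Kn_in01 n); auto).
    rewrite Rabs_inv. apply Rinv_le_contravar; auto.
Qed.

Lemma MVT' (f df : R -> R) a b :
  (forall x, Rabs (x - a) <= Rabs (b - a) -> is_derive f x (df x)) ->
  exists c, Rabs (c - a) <= Rabs (b - a) /\ f b - f a = df c * (b - a).
Proof.
  intros H.
  assert (Hr : forall x, Rmin a b <= x <= Rmax a b -> Rabs (x - a) <= Rabs (b - a)).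
  { intros x Hx. unfold Rmin, Rmax in Hx. destruct (Rle_dec a b).
    - rewrite (Rabs_pos_eq (b - a)), Rabs_pos_eq; lra.
    - rewrite (Rabs_left (b - a)), Rabs_left1; lra. }
  destruct (MVT_gen f a b df) as [c [Hc E]].
  - intros x Hx; apply H, Hr; lra.
  - intros x Hx. apply continuity_pt_filterlim.
    apply (ex_derive_continuous f x). eexists; apply H, Hr; auto.
  - exists c; split; auto.
Qed.

Lemma taylor_bound (P P' P'' : R -> R) t M h :
  (forall r, Rabs (r - t) <= 1 -> is_derive P r (P' r)) ->
  (forall r, Rabs (r - t) <= 1 -> is_derive P' r (P'' r)) ->
  (forall r, Rabs (r - t) <= 1 -> Rabs (P'' r) <= M) ->
  h <> 0 -> Rabs h <= 1 ->
  Rabs ((P (t+h) - P t)/h - P' t) <= M * Rabs h.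
Proof.
  intros D1 D2 B Hh Hh1.
  destruct (MVT' (fun r => P r - P' t * r) (fun r => P' r - P' t) t (t + h))
    as [c [Hc E]].
  { intros x Hx. apply (is_derive_minus P (fun r => P' t * r)).
    - apply D1. replace (t + h - t) with h in Hx by ring. lra.
    - auto_derive; auto; try ring. }
  replace (t + h - t) with h in Hc, E by ring.
  destruct (MVT' P' P'' t c) as [d [Hd E2]].
  { intros x Hx. apply D2. lra. }
  replace ((P (t + h) - P t) / h - P' t) with (P' c - P' t).
  2:{ apply (Rmult_eq_reg_r h); auto. rewrite <- E. field. auto. }
  rewrite E2, Rabs_mult.
  apply Rmult_le_compat; [apply Rabs_pos|apply Rabs_pos|apply B; lra|lra].
Qed.

Lemma frechet_ex e0 t : wf e0 ->
  frechet_deriv (fun s x => eval e0 s x) t (fun x => eval (ds e0) t x).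
Proof.
  intros WF n k eps Heps. cbv beta.
    set (F := e0) in *.
    destruct (bounded (ds (ds (dxn k F))) ltac:(apply wf_ds, wf_ds, wf_dxn; auto) n t)
      as [M0 HM0].
    set (M := Rabs M0).
    assert (HM : forall s x, Rabs (s - t) <= 1 -> in_Kn n x ->
       Rabs (eval (ds (ds (dxn k F))) s x) <= M).
    { intros s x H1 H2. specialize (HM0 s x H1 H2). unfold M.
      generalize (Rle_abs M0); lra. }
    assert (Mpos : 0 <= M) by apply Rabs_pos.
    assert (Hd : 0 < Rmin 1 (eps / (M + 1))).
    { apply Rmin_glb_lt; [lra|]. apply Rdiv_lt_0_compat; lra. }
    exists (Rmin 1 (eps / (M + 1))). split; auto.
    intros h Hh0 Hh x Hx.
    assert (Hx' := Kn_in01 n x Hx).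
    assert (Hh1 : Rabs h <= 1) by (generalize (Rmin_l 1 (eps / (M+1))); lra).
    assert (Hh2 : Rabs h <= eps / (M + 1)) by (generalize (Rmin_r 1 (eps / (M+1))); lra).
    destruct (derive_family (fun y => (eval F (t + h) y - eval F t y) / h)
      (fun k y => (eval (dxn k F) (t + h) y - eval (dxn k F) t y) / h))
      with (k := k) (x := x) as [_ E1]; auto.
    { intros k' y Hy. simpl.
      apply (is_derive_ext (fun y => / h * (eval (dxn k' F) (t + h) y - eval (dxn k' F) t y))).
      { intros z. unfold Rdiv. apply Rmult_comm. }
      replace ((eval (dx (dxn k' F)) (t + h) y - eval (dx (dxn k' F)) t y) / h)
        with (/ h * (eval (dx (dxn k' F)) (t + h) y - eval (dx (dxn k' F)) t y))
        by (unfold Rdiv; ring).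
      apply is_derive_scal.
      apply (is_derive_minus (fun y => eval (dxn k' F) (t + h) y) (fun y => eval (dxn k' F) t y));
        apply deriv_x; auto; apply wf_dxn; auto. }
    rewrite E1. cbv beta.
    destruct (derive_n_eval (ds F) t ltac:(apply wf_ds; auto) k x Hx') as [_ E2].
    rewrite E2.
    rewrite commn by auto.
    eapply Rle_trans.
    { apply (taylor_bound (fun r => eval (dxn k F) r x) (fun r => eval (ds (dxn k F)) r x)
              (fun r => eval (ds (ds (dxn k F))) r x) t M h); auto.
      - intros r _. apply deriv_s; auto. apply wf_dxn; auto.
      - intros r _. apply deriv_s; auto. apply wf_ds, wf_dxn; auto. }
    apply Rle_trans with (M * (eps / (M + 1))).
    { apply Rmult_le_compat_l; auto. }
    assert (Hq : eps / (M+1) * (M+1) = eps) by (field; lra).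
    assert (0 <= eps / (M+1)) by (apply Rlt_le, Rdiv_lt_0_compat; lra).
    nra.
Qed.

Lemma smooth_curve_ex e : wf e -> smooth_curve (fun s x => eval e s x).
Proof.
  intros W. exists (fun j s x => eval (dsn j e) s x). split; [|split].
  - reflexivity.
  - intros j t k x Hx. apply derive_n_eval; auto. apply wf_dsn; auto.
  - intros j t. apply (frechet_ex (dsn j e)), wf_dsn; auto.
Qed.

Lemma T_bound s : Rabs (s * / (1 + 16 * (s * s))) <= 1/8.
Proof.
  assert (Hd : 0 < 1 + 16 * (s * s)) by nra.
  rewrite Rabs_mult, Rabs_inv, (Rabs_pos_eq (1 + _)) by lra.
  apply (Rmult_le_reg_r (1 + 16 * (s * s))); auto.
  rewrite Rmult_assoc, Rinv_l by lra.
  destruct (Rle_dec 0 s).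
  - rewrite Rabs_pos_eq by auto. pose proof (Rle_0_sqr (4*s-1)). unfold Rsqr in *. lra.
  - rewrite Rabs_left by lra. pose proof (Rle_0_sqr (4*s+1)). unfold Rsqr in *. lra.
Qed.

Lemma G_in01 T x : Rabs T <= 1/8 -> 0 < x < 1 ->
  0 < x + T * (x * ((1 + -1 * x) * (1 + -1 * x))) *
        / ((1 + -1 * x) * (1 + -1 * x) + T * T * (x * x)) < 1.
Proof.
  intros HT Hx. set (A := 1 + -1 * x).
  assert (HA : 0 < A) by (unfold A; lra).
  set (B := A * A + T * T * (x * x)).
  assert (HB : A * A <= B) by (unfold B; nra).
  assert (HB0 : 0 < B) by nra.
  apply Rabs_le_between in HT.
  split.
  - apply (Rmult_lt_reg_r B); auto. rewrite Rmult_plus_distr_r, Rmult_assoc, Rinv_l by lra.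
    assert (0 <= x * (B - A * A)) by (apply Rmult_le_pos; lra).
    assert (0 <= (T + 1/8) * (x * (A * A))) by (apply Rmult_le_pos; [lra| apply Rmult_le_pos; nra]).
    assert (0 < x * (A * A)) by (apply Rmult_lt_0_compat; nra).
    nra.
  - apply (Rmult_lt_reg_r B); auto. rewrite Rmult_plus_distr_r, Rmult_assoc, Rinv_l by lra.
    assert (Q : 0 < A * A - T * x * A + T * T * (x * x)).
    { pose proof (Rle_0_sqr (A/2 - T*x)). unfold Rsqr in *. nra. }
    assert (0 < A * (A * A - T * x * A + T * T * (x * x))) by (apply Rmult_lt_0_compat; auto).
    assert (E : A = 1 - x) by (unfold A; ring).
    replace (x * B + T * (x * (A * A)) * 1) with (B - A * (A * A - T * x * A + T * T * (x * x))).
    + lra.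
    + unfold B. rewrite E. ring.
Qed.

Definition Dcl T x :=
  let A := 1 - x in let B := A * A + T * T * (x * x) in
  1 + T * (A^4 - T^2 * x^2 * A^2 - 2 * T^2 * x^3 * A) / B^2.

Lemma Dcl_bounds T x : Rabs T <= 1/8 -> 0 < x < 1 -> 1/8 <= Dcl T x <= 3.
Proof.
  intros HT Hx. unfold Dcl.
  set (A := 1 - x). assert (HA : 0 < A) by (unfold A; lra).
  set (c := T * x).
  set (B := A * A + T * T * (x * x)).
  assert (HBc : B = A * A + c * c) by (unfold B, c; ring).
  assert (HB0 : 0 < B) by (rewrite HBc; nra).
  assert (HB2 : 0 < B ^ 2) by (apply pow_lt; auto).
  replace (T * (A ^ 4 - T ^ 2 * x ^ 2 * A ^ 2 - 2 * T ^ 2 * x ^ 3 * A))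
    with (T * A^4 - T * (c * c) * A^2 - 2 * (c * c * c) * A) by (unfold c; ring).
  apply Rabs_le_between in HT.
  set (N := T * A ^ 4 - T * (c * c) * A ^ 2 - 2 * (c * c * c) * A).
  assert (P1 : 0 <= (T + 1/8) * A^4) by (apply Rmult_le_pos; [lra| apply pow_le; lra]).
  assert (P1' : 0 <= (1/8 - T) * A^4) by (apply Rmult_le_pos; [lra| apply pow_le; lra]).
  assert (P2 : 0 <= (1/8 - T) * (c*c*A^2)).
  { apply Rmult_le_pos; [lra|]. apply Rmult_le_pos; [nra| apply pow_le; lra]. }
  assert (P2' : 0 <= (T + 1/8) * (c*c*A^2)).
  { apply Rmult_le_pos; [lra|]. apply Rmult_le_pos; [nra| apply pow_le; lra]. }
  assert (P3 : 0 <= c*c*((A - 8/13*c)*(A - 8/13*c))) by (apply Rmult_le_pos; apply Rle_0_sqr).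
  assert (P3' : 0 <= c*c*((c - A)*(c - A))) by (apply Rmult_le_pos; apply Rle_0_sqr).
  assert (P3'' : 0 <= c*c*((c + A)*(c + A))) by (apply Rmult_le_pos; apply Rle_0_sqr).
  assert (P4 : 0 <= c*c*(c*c)) by (apply Rmult_le_pos; apply Rle_0_sqr).
  assert (P5 : 0 <= c*c*(A*A)) by (apply Rmult_le_pos; apply Rle_0_sqr).
  assert (L : 0 <= 7/8 * B^2 + N).
  { rewrite HBc. unfold N. destruct (Rle_dec 0 c).
    - lra.
    - assert (0 <= - (c*c*c) * A) by (apply Rmult_le_pos; nra). lra. }
  assert (U : 0 <= 2 * B^2 - N).
  { rewrite HBc. destruct (Rle_dec 0 c).
    - replace (2 * (A * A + c * c)^2 - N) with
        ((1/8 - T)*A^4 + (T + 1/8)*(c*c*A^2) + 2 * (c*c*c) * A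
          + 15/8*A^4 + 31/8 * (c*c*A^2) + 2*(c*c*(c*c))) by (unfold N; field).
      assert (0 <= (c*c*c) * A) by (apply Rmult_le_pos; [|lra]; apply Rmult_le_pos; [apply Rle_0_sqr|lra]).
      assert (0 <= A^4) by (apply pow_le; lra).
      assert (0 <= c*c*A^2) by (apply Rmult_le_pos; [apply Rle_0_sqr|apply pow_le; lra]). lra.
    - replace (2 * (A * A + c * c)^2 - N) with
        ((1/8 - T)*A^4 + (T + 1/8)*(c*c*A^2) + c*c*((c + A)*(c + A))
          + 15/8*A^4 + 23/8 * (c*c*A^2) + (c*c*(c*c))) by (unfold N; field).
      assert (0 <= A^4) by (apply pow_le; lra).
      assert (0 <= c*c*A^2) by (apply Rmult_le_pos; [apply Rle_0_sqr|apply pow_le; lra]). lra. }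
  set (q := N / B ^ 2).
  assert (Hq : q * B^2 = N) by (unfold q; field; lra).
  split; nra.
Qed.

Definition den1 := EAdd (EC 1) (EMul (EC 16) (EMul ES ES)).
Definition tau := EMul ES (EInv den1).
Definition Ax := EAdd (EC 1) (EMul (EC (-1)) EX).
Definition Bd := EAdd (EMul Ax Ax) (EMul (EMul tau tau) (EMul EX EX)).
Definition Ge := EAdd EX (EMul (EMul tau (EMul EX (EMul Ax Ax))) (EInv Bd)).

Lemma den1_pos s : 1 <= 1 + 16 * (s * s).
Proof. nra. Qed.

Lemma Kn_gap n x : in_Kn n x -> 1 / (INR n + 1) <= 1 + -1 * x.
Proof.
  unfold in_Kn; intros [_ H].
  assert (0 <= INR n) by apply pos_INR.
  replace (1 / (INR n + 1)) with (1 - INR n / (INR n + 1)) by (field; lra). lra.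
Qed.

Lemma wf_Ge : wf Ge.
Proof.
  assert (Wt : wf tau).
  { simpl. repeat split.
    - intros s x _. generalize (den1_pos s); lra.
    - intros n. exists 1. split; [lra|]. intros s x _.
      generalize (den1_pos s); intros; rewrite Rabs_pos_eq; lra. }
  simpl in Wt. simpl. repeat split; try tauto.
  - intros s x [H0 H1].
    assert (0 < (1 + -1 * x) * (1 + -1 * x)) by (apply Rmult_lt_0_compat; lra).
    assert (0 <= s * / (1 + 16 * (s * s)) * (s * / (1 + 16 * (s * s))) * (x * x)).
    { apply Rmult_le_pos; apply Rle_0_sqr. }
    lra.
  - intros n. exists ((1 / (INR n + 1)) * (1 / (INR n + 1))).
    assert (0 <= INR n) by apply pos_INR.
    assert (0 < 1 / (INR n + 1)) by (apply Rdiv_lt_0_compat; lra).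
    split; [nra|]. intros s x Hx.
    assert (G := Kn_gap n x Hx).
    assert (0 <= s * / (1 + 16 * (s * s)) * (s * / (1 + 16 * (s * s))) * (x * x)).
    { apply Rmult_le_pos; apply Rle_0_sqr. }
    rewrite Rabs_pos_eq.
    + assert (1 / (INR n + 1) * (1 / (INR n + 1)) <= (1 + -1 * x) * (1 + -1 * x)).
      { apply Rmult_le_compat; lra. }
      lra.
    + assert (0 <= (1 + -1 * x) * (1 + -1 * x)) by apply Rle_0_sqr. lra.
Qed.

Lemma dGe_closed s x : in01 x -> eval (dx Ge) s x = Dcl (s * / (1 + 16 * (s * s))) x.
Proof.
  intros [H0 H1]. unfold Dcl. simpl.
  assert (Hd : 1 + 16 * (s * s) <> 0) by (generalize (den1_pos s); lra).
  set (T := s * / (1 + 16 * (s * s))).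
  assert (HB : (1 + -1 * x) * (1 + -1 * x) + T * T * (x * x) <> 0).
  { assert (0 < (1 + -1 * x) * (1 + -1 * x)) by (apply Rmult_lt_0_compat; lra).
    assert (0 <= T * T * (x * x)) by (apply Rmult_le_pos; apply Rle_0_sqr). lra. }
  assert (HB' : (1 - x) * (1 - x) + T * T * (x * x) <> 0).
  { replace (1 - x) with (1 + -1 * x) by ring. auto. }
  field; auto.
Qed.

Definition Gf T x := x + T * (x * ((1 + -1 * x) * (1 + -1 * x))) *
        / ((1 + -1 * x) * (1 + -1 * x) + T * T * (x * x)).

Lemma Ge_eval s x : eval Ge s x = Gf (s * / (1 + 16 * (s * s))) x.
Proof. reflexivity. Qed.

Lemma G_close T x : Rabs T <= 1/8 -> 0 < x < 1 ->
  Rabs (Gf T x - x) <= x / 8 /\ Rabs (Gf T x - x) <= (1 - x) / 2.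
Proof.
  intros HT Hx. unfold Gf. set (A := 1 + -1 * x).
  assert (HA : 0 < A) by (unfold A; lra).
  set (B := A * A + T * T * (x * x)).
  assert (HB : A * A <= B) by (unfold B; assert (0 <= T*T*(x*x)) by (apply Rmult_le_pos; apply Rle_0_sqr); lra).
  assert (HB0 : 0 < B) by (assert (0 < A * A) by (apply Rmult_lt_0_compat; lra); lra).
  replace (x + T * (x * (A * A)) * / B - x) with (T * (x * (A * A)) / B) by (unfold Rdiv; ring).
  assert (Hp : 0 <= x * (A * A)) by (apply Rmult_le_pos; [lra | apply Rle_0_sqr]).
  unfold Rdiv. rewrite Rabs_mult, Rabs_mult, Rabs_inv, (Rabs_pos_eq B) by lra.
  rewrite (Rabs_pos_eq (x * (A*A))) by lra.
  split.
  - apply (Rmult_le_reg_r B); auto. rewrite Rmult_assoc, Rinv_l by lra.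
    assert (0 <= Rabs T) by apply Rabs_pos.
    assert (Rabs T * (x * (A * A)) <= 1/8 * (x * B)).
    { apply Rmult_le_compat; try lra. apply Rmult_le_compat_l; lra. }
    lra.
  - apply (Rmult_le_reg_r B); auto. rewrite Rmult_assoc, Rinv_l by lra.
    assert (E : 1 - x = A) by (unfold A; ring). rewrite E.
    assert (Q : 2 * (Rabs T * x) * A <= B).
    { unfold B. pose proof (Rle_0_sqr (A - Rabs T * x)). unfold Rsqr in *.
      assert (Rabs T * Rabs T = T * T) by (rewrite <- Rabs_mult; apply Rabs_pos_eq, Rle_0_sqr).
      nra. }
    assert (0 <= Rabs T) by apply Rabs_pos.
    nra.
Qed.

Lemma lim1 (f : R -> R) : (forall x, 0 < x < 1 -> Rabs (f x - 1) <= 2 * (1 - x)) ->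
  filterlim f (at_left 1) (locally 1).
Proof.
  intros H. apply filterlim_locally. intros eps.
  assert (Hd : 0 < Rmin (eps / 4) (1/2)).
  { apply Rmin_glb_lt; [generalize (cond_pos eps); lra | lra]. }
  exists (mkposreal _ Hd). intros y Hy Hy1.
  change (Rabs (y - 1) < Rmin (eps / 4) (1/2)) in Hy.
  change (Rabs (f y - 1) < eps).
  generalize (Rmin_l (eps/4) (1/2)) (Rmin_r (eps/4) (1/2)) (cond_pos eps); intros.
  apply Rabs_def2 in Hy.
  assert (Hb := H y ltac:(lra)). lra.
Qed.

Lemma lim0 (f : R -> R) : (forall x, 0 < x < 1 -> Rabs (f x - 0) <= 2 * x) ->
  filterlim f (at_right 0) (locally 0).
Proof.
  intros H. apply filterlim_locally. intros eps.
  assert (Hd : 0 < Rmin (eps / 4) (1/2)).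
  { apply Rmin_glb_lt; [generalize (cond_pos eps); lra | lra]. }
  exists (mkposreal _ Hd). intros y Hy Hy1.
  change (Rabs (y - 0) < Rmin (eps / 4) (1/2)) in Hy.
  change (Rabs (f y - 0) < eps).
  generalize (Rmin_l (eps/4) (1/2)) (Rmin_r (eps/4) (1/2)) (cond_pos eps); intros.
  apply Rabs_def2 in Hy.
  assert (Hb := H y ltac:(lra)). lra.
Qed.

Lemma inD_Ge s : inD (fun x => eval Ge s x).
Proof.
  assert (HT := T_bound s).
  split; [split; [|split; [|split]] | split].
  - intros k x Hx. apply derive_n_eval; auto. apply wf_Ge.
  - intros x Hx. rewrite Ge_eval. apply G_in01; auto.
  - apply lim1. intros x Hx. rewrite Ge_eval.
    destruct (G_close _ x HT Hx) as [_ H2].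
    replace (Gf (s * / (1 + 16 * (s * s))) x - 1) with
      ((Gf (s * / (1 + 16 * (s * s))) x - x) + - (1 - x)) by ring.
    eapply Rle_trans; [apply Rabs_triang|]. rewrite Rabs_Ropp, (Rabs_pos_eq (1 - x)) by lra. lra.
  - apply lim0. intros x Hx. rewrite Ge_eval.
    destruct (G_close _ x HT Hx) as [H1 _].
    replace (Gf (s * / (1 + 16 * (s * s))) x - 0) with
      ((Gf (s * / (1 + 16 * (s * s))) x - x) + x) by ring.
    eapply Rle_trans; [apply Rabs_triang|]. rewrite (Rabs_pos_eq x) by lra. lra.
  - exists (1/8). split; [lra|]. intros x Hx.
    assert (E := is_derive_unique _ _ _ (deriv_x Ge s x wf_Ge Hx)).
    match goal with |- context [Derive ?f x] => replace (Derive f x) with (eval (dx Ge) s x) by (symmetry; exact E) end.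
    rewrite dGe_closed by auto.
    assert (Hx' : 0 < x < 1) by (unfold in01 in Hx; lra).
    destruct (Dcl_bounds _ x HT Hx'); auto.
  - exists 3. intros x Hx.
    assert (E := is_derive_unique _ _ _ (deriv_x Ge s x wf_Ge Hx)).
    match goal with |- context [Derive ?f x] => replace (Derive f x) with (eval (dx Ge) s x) by (symmetry; exact E) end.
    rewrite dGe_closed by auto.
    assert (Hx' : 0 < x < 1) by (unfold in01 in Hx; lra).
    destruct (Dcl_bounds _ x HT Hx'); auto.
Qed.

Lemma frechet_transfer c t d d' : frechet_deriv c t d ->
  (forall x, in01 x -> d x = d' x) -> frechet_deriv c t d'.
Proof.
  intros F E n k eps Heps. destruct (F n k eps Heps) as [delta [Hd H]].
  exists delta; split; auto. intros h H0 H1 x Hx.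
  rewrite <- (Derive_n_ext_loc d d' k x).
  - apply H; auto.
  - apply filter_imp with (2 := in01_locally x (Kn_in01 n x Hx)). auto.
Qed.

Lemma dsGe_0 x : in01 x -> eval (ds Ge) 0 x = x.
Proof.
  intros [H0 H1]. simpl.
  assert (Hd : 1 + 16 * (0 * 0) <> 0) by lra.
  assert (HB : (1 + -1 * x) * (1 + -1 * x) + 0 * / (1 + 16 * (0 * 0)) * (0 * / (1 + 16 * (0 * 0))) * (x * x) <> 0).
  { replace (0 * / (1 + 16 * (0 * 0)) * (0 * / (1 + 16 * (0 * 0))) * (x * x)) with 0 by ring.
    assert (0 < (1 + -1 * x) * (1 + -1 * x)) by (apply Rmult_lt_0_compat; lra). lra. }
  field. lra.
Qed.

Lemma tangent_id : in_TidD (fun x => x).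
Proof.
  exists (fun s x => eval Ge s x). split; [split|split].
  - apply smooth_curve_ex, wf_Ge.
  - apply inD_Ge.
  - intros x _. simpl. ring.
  - apply frechet_transfer with (d := fun x => eval (ds Ge) 0 x).
    + apply frechet_ex, wf_Ge.
    + apply dsGe_0.
Qed.

Lemma inD_mono f : inD f -> forall a b, in01 a -> in01 b -> a < b -> f a < f b.
Proof.
  intros [[Hs _] [[c [Hc Hd]] _]] a b Ha Hb Hab.
  assert (Hder : forall x, in01 x -> is_derive f x (Derive f x)).
  { intros x Hx. apply Derive_correct. exact (Hs 1%nat x Hx). }
  destruct (MVT_gen f a b (Derive f)) as [z [Hz E]].
  - intros x Hx. rewrite Rmin_left, Rmax_right in Hx by lra. apply Hder.
    unfold in01 in *; lra.
  - intros x Hx. rewrite Rmin_left, Rmax_right in Hx by lra.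
    apply continuity_pt_filterlim, (ex_derive_continuous f x).
    eexists; apply Hder; unfold in01 in *; lra.
  - rewrite Rmin_left, Rmax_right in Hz by lra.
    assert (c <= Derive f z) by (apply Hd; unfold in01 in *; lra).
    assert (0 < Derive f z * (b - a)) by (apply Rmult_lt_0_compat; lra). lra.
Qed.

Lemma inD_inj f : inD f -> forall a b, in01 a -> in01 b -> f a = f b -> a = b.
Proof.
  intros H a b Ha Hb E. destruct (Rtotal_order a b) as [L|[L|L]]; auto.
  - apply (inD_mono f H a b) in L; auto. lra.
  - apply (inD_mono f H b a) in L; auto. lra.
Qed.

Lemma inv01_at f a : inD f -> in01 a -> inv01 f (f a) = a.
Proof.
  intros H Ha. unfold inv01.
  destruct (epsilon_spec (inhabits 0) (fun x => in01 x /\ f x = f a)) as [H1 H2].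
  { exists a; auto. }
  apply (inD_inj f H); auto.
Qed.

Lemma no_flow : ~ (exists g : R -> R -> R,
         smooth_path_D g /\
         exists dg : R -> R -> R,
           (forall t, frechet_deriv g t (dg t)) /\
           (forall t x, in01 x -> dg t (inv01 (g t) x) = (fun t x => x) t x)).
Proof.
  intros [g [[_ HD] [dg [Hdg Hv]]]].
  set (phi := fun t => g t (1/2)).
  assert (Hh : in01 (1/2)) by (unfold in01; lra).
  assert (Hphi : forall t, in01 (phi t)).
  { intros t. destruct (HD t) as [[_ [Hi _]] _]. apply Hi; auto. }
  assert (Hd : forall t, is_derive phi t (phi t)).
  { intros t. assert (Eq : dg t (1/2) = phi t).
    { unfold phi. rewrite <- (inv01_at (g t) (1/2) (HD t) Hh) at 1. apply Hv. apply Hphi. }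
    rewrite <- Eq.
    apply is_derive_Reals. intros eps Heps.
    destruct (Hdg t 1%nat 0%nat (eps/2) ltac:(lra)) as [delta [Hdel H]].
    exists (mkposreal _ Hdel). intros h Hh0 Hh1.
    assert (K : in_Kn 1 (1/2)) by (unfold in_Kn; simpl; lra).
    specialize (H h Hh0 Hh1 (1/2) K). simpl in H. unfold phi. lra. }
  set (a := phi 0).
  assert (Ha : in01 a) by apply Hphi.
  unfold in01 in Ha.
  set (psi := fun t => phi t * exp (- t)).
  assert (Hpsi : forall t, is_derive psi t 0).
  { intros t. unfold psi.
    assert (He : is_derive (fun t => exp (- t)) t (- exp (- t))).
    { auto_derive; auto; ring. }
    replace 0 with (phi t * exp (- t) + phi t * (- exp (- t))) by ring.
    apply (is_derive_mult phi (fun t => exp (- t))); auto.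
    intros; apply Rmult_comm. }
  set (T := ln 2 - ln a).
  destruct (MVT_gen psi 0 T (fun _ => 0)) as [z [_ E]].
  - intros; apply Hpsi.
  - intros x _. apply continuity_pt_filterlim, (ex_derive_continuous psi x).
    eexists; apply Hpsi.
  - unfold psi in E. rewrite Ropp_0, exp_0 in E.
    replace (- T) with (ln a + - ln 2) in E by (unfold T; ring).
    rewrite exp_plus, exp_Ropp, !exp_ln in E by lra.
    fold a in E.
    assert (H1 := Hphi T). unfold in01 in H1.
    assert (phi T * a < 2 * a) by (apply Rmult_lt_compat_r; lra).
    nra.
Qed.

Theorem theorem8p4 :
  exists v : R -> R -> R,
    smooth_curve v /\ (forall t, in_TidD (v t)) /\
    ~ (exists g : R -> R -> R,
         smooth_path_D g /\
         exists dg : R -> R -> R,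
           (forall t, frechet_deriv g t (dg t)) /\
           (forall t x, in01 x -> dg t (inv01 (g t) x) = v t x)).
Proof.
  exists (fun t x => x). split; [|split].
  - exact (smooth_curve_ex EX I).
  - intros t. exact tangent_id.
  - exact no_flow.
Qed.
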